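(* Let $N\ge 2$ be an integer and $a>0$ real. Let $H=H^{(N)}(a)$ be the real $N\times N$ tridiagonal matrix with $H_{nn}=a+2n-1$, $H_{n,n+1}=-n$, $H_{n+1,n}=-(a+n)$, all other entries zero. Write $D_n(a)=\prod_{j=1}^{n-1}(a+j)$ (so $D_1(a)=1$). Let $\Theta_0$ be the diagonal matrix with entries $(\Theta_0)_{nn}=(n-1)!/D_n(a)$, $n=1,\dots,N$. Let $\mathcal P_1=\mathcal P_1^{(N)}(a)$ be the real symmetric tridiagonal $N\times N$ matrix with $(\mathcal P_1)_{11}=0$, $$(\mathcal P_1)_{nn}=-\frac{2(n-1)\,(n-1)!}{D_n(a)}\quad(n=2,\dots,N),\qquad (\mathcal P_1)_{n,n+1}=(\mathcal P_1)_{n+1,n}=\frac{n!}{D_n(a)}\quad(n=1,\dots,N-1),$$ and all other entries zero. Then $H^\dagger\mathcal P_1=\mathcal P_1H$. Consequently, for every real $\alpha$ the tridiagonal matrix $\Theta_1(a,\alpha)=\Theta_0+\alpha\mathcal P_1$ satisfies $H^\dagger\Theta_1=\Theta_1H$, and it is a positive definite metric for $H$ whenever $|\alpha|$ is sufficiently small.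
   Context: $H^\dagger$ is the conjugate transpose. A metric for $H$ is a positive definite Hermitian matrix $\Theta$ with $H^\dagger\Theta=\Theta H$. The entries of $\mathcal P_1$ do not depend on $N$ (apart from the truncation). *)

(* Defs.v *)
From HB Require Import structures.
From mathcomp Require Import all_boot all_order all_algebra.
Set Implicit Arguments. Unset Strict Implicit. Unset Printing Implicit Defensive.
Import Order.TTheory GRing.Theory Num.Theory.
Local Open Scope ring_scope.

(* Indices: the paper's row index n = 1..N corresponds to i : 'I_N with n = i+1. *)

Definition Dn (R : realFieldType) (a : R) (n : nat) : R :=
  \prod_(1 <= j < n) (a + j%:R).

Definition Hmat (R : realFieldType) (N : nat) (a : R) : 'M[R]_N :=
  \matrix_(i < N, j < N)
    if (j : nat) == i then a + (2 * i + 1)%:R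
    else if (j : nat) == i.+1 then - (i.+1)%:R
    else if (i : nat) == j.+1 then - (a + (j.+1)%:R)
    else 0.

Definition Theta0 (R : realFieldType) (N : nat) (a : R) : 'M[R]_N :=
  \matrix_(i < N, j < N)
    if (j : nat) == i then (i`!)%:R / Dn a i.+1 else 0.

Definition P1 (R : realFieldType) (N : nat) (a : R) : 'M[R]_N :=
  \matrix_(i < N, j < N)
    if (j : nat) == i then
      (if (i : nat) == 0%N then 0 else - ((2 * i * i`!)%:R / Dn a i.+1))
    else if (j : nat) == i.+1 then ((i.+1)`!)%:R / Dn a i.+1
    else if (i : nat) == j.+1 then ((j.+1)`!)%:R / Dn a j.+1
    else 0.

Definition Theta1 (R : realFieldType) (N : nat) (a alpha : R) : 'M[R]_N :=
  Theta0 N a + alpha *: P1 N a.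

(* For a real matrix the conjugate transpose is the transpose. *)
Definition pos_def (R : realFieldType) (N : nat) (T : 'M[R]_N) : Prop :=
  T^T = T /\ forall x : 'cV[R]_N, x != 0 -> 0 < (x^T *m T *m x) 0 0.

Definition is_metric (R : realFieldType) (N : nat) (H T : 'M[R]_N) : Prop :=
  pos_def T /\ H^T *m T = T *m H.

(* Main.v *)
Require Import Defs.
From HB Require Import structures.
From mathcomp Require Import all_boot all_order all_algebra.
From mathcomp Require Import reals.
From mathcomp Require Import zify ring lra.
Import Order.TTheory GRing.Theory Num.Theory.
Local Open Scope ring_scope.
Set Implicit Arguments. Unset Strict Implicit.

Ltac elim_ifs := repeat match goal with |- context[if ?b then _ else _] => let H := fresh "H" in case: (boolP b) => H; try (exfalso; lia); try (move/eqP: H => H; subst) end.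

Section S.
Variable R : realFieldType.
Variable a : R.
Hypothesis a_gt0 : 0 < a.

Definition hf (i j : nat) : R :=
    if j == i then a + 2 * i%:R + 1
    else if j == i.+1 then - (i%:R + 1)
    else if i == j.+1 then - (a + j%:R + 1)
    else 0.

Definition pf (i j : nat) : R :=
    if j == i then
      (if i == 0%N then 0 else - (2 * i%:R * i`!%:R / Dn a i.+1))
    else if j == i.+1 then (i%:R + 1) * i`!%:R / Dn a i.+1
    else if i == j.+1 then (j%:R + 1) * j`!%:R / Dn a j.+1
    else 0.

Definition tf (i j : nat) : R := if j == i then i`!%:R / Dn a i.+1 else 0.

Lemma DnS n : Dn a n.+2 = Dn a n.+1 * (a + n.+1%:R).
Proof. by rewrite /Dn big_nat_recr. Qed.

Lemma Dn_gt0 n : 0 < Dn a n.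
Proof.
rewrite /Dn; apply: prodr_gt0 => j _; apply: ltr_pwDl => //.
Qed.

Lemma Dn_neq0 n : Dn a n != 0.
Proof. by rewrite gt_eqF // Dn_gt0. Qed.

Lemma sum_if N c (x : R) : \sum_(k < N) (if (k : nat) == c then x else 0) = if (c < N)%N then x else 0.
Proof.
elim: N => [|N IH]; first by rewrite big_ord0.
rewrite big_ord_recr /= IH.
case: eqP => [->|H]; first by rewrite ltnn ltnSn add0r.
rewrite addr0; case: ltnP => H1; case: ltnP => H2 //; lia.
Qed.

Lemma sum_tri N (g : nat -> R) i : (i < N)%N ->
  (forall k, k <> i.-1 -> k <> i -> k <> i.+1 -> g k = 0) ->
  \sum_(k < N) g k = (if i is 0 then 0 else g i.-1) + g i + (if (i.+1 < N)%N then g i.+1 else 0).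
Proof.
move=> iN Hg.
have E : forall k, g k = (if k == i.-1 then (if i is 0 then 0 else g i.-1) else 0)
   + (if k == i then g i else 0) + (if k == i.+1 then g i.+1 else 0).
  move=> k; case: (k =P i.-1) => H1; case: (k =P i) => H2; case: (k =P i.+1) => H3;
   try (exfalso; lia); rewrite ?addr0 ?add0r.
  - have Ei : i = 0%N by lia.
    by rewrite H2 Ei /= add0r.
  - by case: i iN Hg H1 H2 {H3} => [|m] /= _ _ H1 H2; [lia | subst k].
  - by subst k.
  - by subst k.
  - by rewrite Hg.
rewrite (eq_bigr _ (fun (k : 'I_N) _ => E k)) !big_split /= !sum_if iN.
by case: i iN {Hg E} => [|i] //= iN; rewrite ifT //; lia.
Qed.


Ltac norm := rewrite ?DnS ?factS ?natrM ?natrD -?natr1 ?mul0r ?mulr0 ?add0r ?addr0 ?subrr ?oppr0.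

Lemma pos_add (y : R) : 0 <= y -> a + y != 0.
Proof. by move=> hy; rewrite gt_eqF // ltr_pwDl. Qed.

Ltac nz := try done; repeat (apply/andP; split); try apply: Dn_neq0;
  try (apply: pos_add; rewrite ?addr_ge0 ?ler0n ?ler01 //).

Lemma comm_P N i j : (i < N)%N -> (j < N)%N ->
  \sum_(k < N) (hf k i * pf k j) = \sum_(k < N) (pf i k * hf k j).
Proof.
move=> iN jN; apply/eqP; rewrite -subr_eq0 -sumrB; apply/eqP.
rewrite (@sum_tri N (fun k => hf k i * pf k j - pf i k * hf k j) i iN); last first.
  move=> k H1 H2 H3; rewrite /hf /pf; elim_ifs; by rewrite ?mul0r ?mulr0 subrr.
have [Hj|[Hj|[Hj|[Hj|[Hj|Hj]]]]] : j = i.+2 \/ j = i.+1 \/ j = i \/ i = j.+1 \/ i = j.+2 \/ (j.+2 < i \/ i.+2 < j)%N by lia.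
{ subst j; case: i iN jN => [|m] iN jN; rewrite /hf /pf /=; elim_ifs; norm.
  all: field; nz. }
{ subst j; case: i iN jN => [|m] iN jN; rewrite /hf /pf /=; elim_ifs; norm.
  all: field; nz. }
{ subst j; case: i iN jN => [|m] iN jN; rewrite /hf /pf /=; elim_ifs; norm.
  all: field; nz. }
{ subst i; rewrite /hf /pf /=; elim_ifs; norm.
  all: field; nz. }
{ subst i; rewrite /hf /pf /=; elim_ifs; norm.
  all: field; nz. }
case: i iN Hj => [|m] iN Hj; rewrite /hf /pf /=; elim_ifs; norm.
all: by rewrite ?addr0.
Qed.

Lemma comm_T N i j : (i < N)%N -> (j < N)%N ->
  \sum_(k < N) (hf k i * tf k j) = \sum_(k < N) (tf i k * hf k j).
Proof.
move=> iN jN; apply/eqP; rewrite -subr_eq0 -sumrB; apply/eqP.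
rewrite (@sum_tri N (fun k => hf k i * tf k j - tf i k * hf k j) i iN); last first.
  move=> k H1 H2 H3; rewrite /hf /tf; elim_ifs; by rewrite ?mul0r ?mulr0 subrr.
have [Hj|[Hj|[Hj|[Hj|[Hj|Hj]]]]] : j = i.+2 \/ j = i.+1 \/ j = i \/ i = j.+1 \/ i = j.+2 \/ (j.+2 < i \/ i.+2 < j)%N by lia.
{ subst j; case: i iN jN => [|m] iN jN; rewrite /hf /tf /=; elim_ifs; norm.
  all: try by rewrite ?addr0.
  all: field; nz. }
{ subst j; case: i iN jN => [|m] iN jN; rewrite /hf /tf /=; elim_ifs; norm.
  all: try by rewrite ?addr0.
  all: field; nz. }
{ subst j; case: i iN jN => [|m] iN jN; rewrite /hf /tf /=; elim_ifs; norm.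
  all: try by rewrite ?addr0.
  all: field; nz. }
{ subst i; rewrite /hf /tf /=; elim_ifs; norm.
  all: try by rewrite ?addr0.
  all: field; nz. }
{ subst i; rewrite /hf /tf /=; elim_ifs; norm.
  all: try by rewrite ?addr0.
  all: field; nz. }
case: i iN Hj => [|m] iN Hj; rewrite /hf /tf /=; elim_ifs; norm.
all: by rewrite ?addr0.
Qed.

End S.

Section M.
Variable R : realFieldType.
Variable N : nat.
Variable a : R.

Lemma Hmat_eq : Hmat N a = \matrix_(i < N, j < N) hf a i j.
Proof.
apply/matrixP => i j; rewrite !mxE /hf.
repeat match goal with |- context[if ?b then _ else _] => case: b end; rewrite ?natrD ?natrM -?natr1 //; ring.
Qed.

Lemma P1_eq : P1 N a = \matrix_(i < N, j < N) pf a i j.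
Proof.
apply/matrixP => i j; rewrite !mxE /pf.
repeat match goal with |- context[if ?b then _ else _] => case: b end; rewrite ?factS ?natrD ?natrM -?natr1 //; ring.
Qed.

Lemma T0_eq : Theta0 N a = \matrix_(i < N, j < N) tf a i j.
Proof. by apply/matrixP => i j; rewrite !mxE /tf. Qed.

Hypothesis a_gt0 : 0 < a.

Lemma commP : (Hmat N a)^T *m P1 N a = P1 N a *m Hmat N a.
Proof.
apply/matrixP => i j; rewrite Hmat_eq P1_eq !mxE.
under eq_bigr => k _ do rewrite !mxE.
under [in RHS]eq_bigr => k _ do rewrite !mxE.
exact: comm_P.
Qed.

Lemma commT : (Hmat N a)^T *m Theta0 N a = Theta0 N a *m Hmat N a.
Proof.
apply/matrixP => i j; rewrite Hmat_eq T0_eq !mxE.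
under eq_bigr => k _ do rewrite !mxE.
under [in RHS]eq_bigr => k _ do rewrite !mxE.
exact: comm_T.
Qed.

Lemma commT1 alpha : (Hmat N a)^T *m Theta1 N a alpha = Theta1 N a alpha *m Hmat N a.
Proof.
by rewrite /Theta1 mulmxDr mulmxDl -scalemxAr -scalemxAl commP commT.
Qed.
End M.

Lemma tf_sym (R : realFieldType) (a : R) i j : tf a i j = tf a j i.
Proof. by rewrite /tf; elim_ifs. Qed.

Lemma pf_sym (R : realFieldType) (a : R) i j : pf a i j = pf a j i.
Proof. by rewrite /pf; elim_ifs. Qed.

Lemma Qform (R : realFieldType) N (M : 'M[R]_N) (x : 'cV[R]_N) :
  (x^T *m M *m x) 0 0 = \sum_(k < N) \sum_(i < N) x i 0 * M i k * x k 0.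
Proof.
rewrite mxE; apply: eq_bigr => k _; rewrite mxE mulr_suml; apply: eq_bigr => i _.
by rewrite mxE.
Qed.

Lemma uv_le (R : realFieldType) (U V S : R) : 0 <= U -> 0 <= V -> U ^+ 2 <= S -> V ^+ 2 <= S -> U * V <= S.
Proof. move=> *; nra. Qed.

Lemma sq_le_sum (R : realFieldType) N (x : 'cV[R]_N) (i : 'I_N) :
  x i 0 ^+ 2 <= \sum_(k < N) x k 0 ^+ 2.
Proof.
by rewrite (bigD1 i) //= lerDl sumr_ge0 // => k _; rewrite sqr_ge0.
Qed.

Lemma pd_part (R : realFieldType) (N : nat) (a : R) : 0 < a ->
  exists2 eps : R, 0 < eps &
    forall alpha : R, `|alpha| < eps -> pos_def (Theta1 N a alpha).
Proof.
move=> a0.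
pose d := fun k : nat => tf a k k.
have dpos k : 0 < d k.
  by rewrite /d /tf eqxx divr_gt0 ?ltr0n ?fact_gt0 ?Dn_gt0.
pose c := \sum_(k < N) (d k)^-1.
have c0 : 0 <= c by rewrite sumr_ge0 // => k _; rewrite invr_ge0 ltW.
pose u := (c + 1)^-1.
have u0 : 0 < u by rewrite invr_gt0; lra.
have du (k : 'I_N) : u <= d k.
  have h1 : (d k)^-1 <= c + 1.
    rewrite /c (bigD1 k) //= -addrA lerDl addr_ge0 // sumr_ge0 // => i _.
    by rewrite invr_ge0 ltW.
  rewrite /u -(invrK (d k)) lef_pV2 // posrE ?invr_gt0 //; lra.
pose C := \sum_(k < N) \sum_(i < N) `|pf a i k|.
have C0 : 0 <= C.
  by apply: sumr_ge0 => k _; apply: sumr_ge0 => i _; exact: normr_ge0.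
exists (u / (C + 1)).
  by rewrite divr_gt0 //; lra.
move=> alpha Ha; split.
  apply/matrixP => i j; rewrite /Theta1 T0_eq P1_eq !mxE.
  by rewrite tf_sym pf_sym.
move=> x xn0.
pose S := \sum_(k < N) x k 0 ^+ 2.
have [i0 Hi0] : exists i, x i 0 != 0.
  case: (pickP (fun i => x i 0 != 0)) => [i Hi | H]; first by exists i.
  exfalso; move/negP: xn0; apply; apply/eqP/matrixP => i j.
  by rewrite ord1 mxE; move: (H i) => /negbFE/eqP.
have S0 : 0 < S.
  apply: (lt_le_trans _ (sq_le_sum x i0)).
  by rewrite -real_normK ?num_real // exprn_gt0 // normr_gt0.
have E : (x^T *m Theta1 N a alpha *m x) 0 0 =
    (x^T *m Theta0 N a *m x) 0 0 + alpha * (x^T *m P1 N a *m x) 0 0.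
  by rewrite /Theta1 mulmxDr mulmxDl -scalemxAr -scalemxAl mxE [X in _ + X]mxE.
have Q0 : u * S <= (x^T *m Theta0 N a *m x) 0 0.
  rewrite Qform /S mulr_sumr; apply: ler_sum => k _.
  rewrite (bigD1 k) //= big1 ?addr0; last first.
    move=> i /negbTE Hik; rewrite mxE; case: eqP => [/val_inj Eki|]; last by rewrite mulr0 mul0r.
    by rewrite Eki eqxx in Hik.
  rewrite mxE eqxx -/(tf a k k) -/(d k) mulrAC -expr2 mulrC.
  by apply: ler_wpM2l; [exact: sqr_ge0 | have := du k; rewrite /d /tf eqxx].
have QP : `|(x^T *m P1 N a *m x) 0 0| <= C * S.
  rewrite Qform /C mulr_suml; apply: (le_trans (ler_norm_sum _ _ _)); apply: ler_sum => k _.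
  rewrite mulr_suml; apply: (le_trans (ler_norm_sum _ _ _)); apply: ler_sum => i _.
  rewrite P1_eq mxE !normrM mulrAC mulrC.
  apply: ler_wpM2l => //; apply: uv_le => //; rewrite real_normK ?num_real //; exact: sq_le_sum.
have Ha2 : `|alpha| * (C + 1) < u by rewrite -ltr_pdivlMr //; lra.
have H1 : - (`|alpha| * (C * S)) <= alpha * (x^T *m P1 N a *m x) 0 0.
  have hy : `|alpha * (x^T *m P1 N a *m x) 0 0| <= `|alpha| * (C * S).
    by rewrite normrM ler_wpM2l.
  have := ler_norm (- (alpha * (x^T *m P1 N a *m x) 0 0)); rewrite normrN; lra.
have H2 : `|alpha| * (C * S) < u * S.
  have := normr_ge0 alpha; nra.
rewrite E; lra.
Qed.

Unset Implicit Arguments.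

Theorem lemma2 (R : realType) (N : nat) (a : R) :
  (2 <= N)%N -> 0 < a ->
  [/\ (Hmat N a)^T *m P1 N a = P1 N a *m Hmat N a,
      (forall alpha : R,
          (Hmat N a)^T *m Theta1 N a alpha = Theta1 N a alpha *m Hmat N a)
    & exists2 eps : R, 0 < eps &
        forall alpha : R, `|alpha| < eps -> is_metric (Hmat N a) (Theta1 N a alpha)].
Proof.
move=> N2 a0; split.
- exact: commP.
- move=> alpha; exact: commT1.
- have [eps e0 H] := pd_part N a0.
  exists eps => // alpha Ha; split; [exact: H | exact: commT1].
Qed.
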